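(* Let $r,n,m_1,m_2,L_1,L_2$ be positive integers with $L_1>m_1$ and $L_2>m_2$, and let $\mathbf{H}_{i,j}\in\mathcal{P}^{r\times n}$, $0\le i\le m_1$, $0\le j\le m_2$, be the component matrices of a two-dimensional spatially-coupled (2D-SC) code with parameters $(m_1,m_2,L_1,L_2)$. Suppose that $$\sum_{i=0}^{m_1-d_1}\sum_{j=0}^{m_2-d_2}\langle \mathbf{H}_{i,j},\mathbf{H}_{i+d_1,j+d_2}\rangle_s=\mathbf{0}_{r\times r}\quad\text{for all }0\le d_1\le m_1,\ 0\le d_2\le m_2,$$ and $$\sum_{i=0}^{m_1-d_1}\sum_{j=0}^{m_2-d_2}\langle \mathbf{H}_{i+d_1,j},\mathbf{H}_{i,j+d_2}\rangle_s=\mathbf{0}_{r\times r}\quad\text{for all }0\le d_1\le m_1,\ 0\le d_2\le m_2.$$ Then the 2D-SC code is a stabilizer code, i.e. the $N$-qubit Pauli operators given by the rows of its parity-check matrix pairwise commute.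
   Context: $\mathcal{P}$ denotes the single-qubit Pauli matrices $\{I,X,Y,Z\}$ (phases ignored). For single-qubit Paulis $P,Q$ the symplectic product $\langle P,Q\rangle_s\in\mathbb{F}_2$ is $0$ if $P$ and $Q$ commute (i.e. $P=I$, $Q=I$ or $P=Q$) and $1$ otherwise. For $\mathbf{P}\in\mathcal{P}^{m_1\times n}$, $\mathbf{Q}\in\mathcal{P}^{m_2\times n}$, $\langle\mathbf{P},\mathbf{Q}\rangle_s$ is the $m_1\times m_2$ binary matrix with $(i,j)$ entry $\sum_{k=1}^n\langle P_{i,k},Q_{j,k}\rangle_s \bmod 2$; this is $0$ exactly when the tensor-product Pauli operators given by row $i$ of $\mathbf{P}$ and row $j$ of $\mathbf{Q}$ commute. The (tail-biting) 2D-SC code with component matrices $\mathbf{H}_{i,j}$ and coupling lengths $L_1,L_2$ has the $rL_1L_2\times nL_1L_2$ parity-check matrix $\mathbf{H}$ (entries in $\mathcal{P}$) whose row blocks are indexed by $(a,b)\in\mathbb{Z}_{L_1}\times\mathbb{Z}_{L_2}$ and column blocks by $(c,d)\in\mathbb{Z}_{L_1}\times\mathbb{Z}_{L_2}$ (blocks ordered lexicographically), where the $((a,b),(c,d))$ block is $\mathbf{H}_{i,j}$ if there are $0\le i\le m_1$, $0\le j\le m_2$ with $i\equiv a-c \pmod{L_1}$ and $j\equiv b-d\pmod{L_2}$, and is the all-$I$ matrix otherwise. Each row of $\mathbf{H}$ is read as an $N=nL_1L_2$-qubit Pauli operator (tensor product of its entries). *)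

(* Defs.v *)
From mathcomp Require Import all_boot all_algebra.
Set Implicit Arguments. Unset Strict Implicit. Unset Printing Implicit Defensive.
Import GRing.Theory.
Local Open Scope ring_scope.

(* Single-qubit Pauli matrices, phases ignored. *)
Inductive Pauli := PI | PX | PY | PZ.

(* Symplectic product of single-qubit Paulis, valued in F_2:
   0 iff they commute (one is I, or they are equal). *)
Definition sympl (P Q : Pauli) : 'F_2 :=
  match P, Q with
  | PI, _ | _, PI => 0
  | PX, PX | PY, PY | PZ, PZ => 0
  | _, _ => 1
  end.

Definition sympl_mx (m1 m2 n : nat) (P : 'M[Pauli]_(m1, n)) (Q : 'M[Pauli]_(m2, n))
  : 'M['F_2]_(m1, m2) :=
  \matrix_(i, j) \sum_(k < n) sympl (P i k) (Q j k).

Lemma ltn_mod_of (i m r : nat) : (i < m * r)%N -> (i %% r < r)%N.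
Proof. by case: r => [|r]; rewrite ?muln0 // ltn_mod. Qed.

Definition omod (m r : nat) (i : 'I_(m * r)) : 'I_r :=
  Ordinal (ltn_mod_of (ltn_ord i)).

(* Tail-biting 2D-SC parity-check matrix, size (L1 L2 r) x (L1 L2 n).
   Row index R = (a*L2 + b)*r + k  (block (a,b), row k of the block),
   column index T = (c*L2 + d)*n + t (block (c,d), column t of the block),
   i.e. blocks ordered lexicographically.  Block ((a,b),(c,d)) is H i j where
   i = (a - c) mod L1 and j = (b - d) mod L2 are the unique representatives in
   [0,L1) and [0,L2) (unique since L1 > m1, L2 > m2), provided i <= m1 and
   j <= m2; otherwise it is the all-I matrix. *)
Definition sc_pcm (r n m1 m2 L1 L2 : nat) (H : nat -> nat -> 'M[Pauli]_(r, n))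
  : 'M[Pauli]_(L1 * L2 * r, L1 * L2 * n) :=
  \matrix_(R, T)
    let k := omod R in
    let t := omod T in
    let rb := (R %/ r)%N in
    let cb := (T %/ n)%N in
    let a := (rb %/ L2)%N in let b := (rb %% L2)%N in
    let c := (cb %/ L2)%N in let d := (cb %% L2)%N in
    let i := ((a + L1 - c) %% L1)%N in
    let j := ((b + L2 - d) %% L2)%N in
    if (i <= m1)%N && (j <= m2)%N then H i j k t else PI.

(* Main.v *)
Require Import Defs.
From mathcomp Require Import all_boot all_algebra zify.
Import GRing.Theory.
Local Open Scope ring_scope.

Module Helpers.
Set Implicit Arguments. Unset Strict Implicit. Unset Printing Implicit Defensive.

Lemma pairo_lt p q (x : 'I_p) (y : 'I_q) : (x * q + y < p * q)%N.
Proof.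
have hx := ltn_ord x; have hy := ltn_ord y.
apply: (@leq_trans (x.+1 * q)); first by rewrite mulSn addnC ltn_add2r.
by rewrite leq_mul2r hx orbT.
Qed.

Definition pairo p q (x : 'I_p) (y : 'I_q) : 'I_(p*q) := Ordinal (pairo_lt x y).

Lemma sum_pair (R : nmodType) p q (F : 'I_(p*q) -> R) :
  \sum_(T < p*q) F T = \sum_(x < p) \sum_(y < q) F (pairo x y).
Proof.
case: q F => [|q] F.
  rewrite big1; last by move=> T _; have := ltn_ord T; rewrite {2}muln0.
  by rewrite big1 // => x _; rewrite big_ord0.
rewrite pair_big /=.
have divlt (T : 'I_(p * q.+1)) : (T %/ q.+1 < p)%N by rewrite ltn_divLR.
pose h' (T : 'I_(p * q.+1)) := (Ordinal (divlt T), Ordinal (ltn_pmod T (ltn0Sn q))).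
rewrite (reindex (fun u : 'I_p * 'I_q.+1 => pairo u.1 u.2)) //.
apply: onW_bij; exists h'.
  move=> [x y]; congr (_, _); apply: val_inj => /=.
    by rewrite divnMDl // divn_small ?addn0.
  by rewrite modnMDl modn_small.
by move=> T; apply: val_inj => /=; rewrite -divn_eq.
Qed.

Lemma modsub a L i : (a < L)%N -> (i < L)%N ->
  ((a + L - i) %% L = if (i <= a)%N then a - i else a + L - i)%N.
Proof.
move=> aL iL; case: ifP => ia.
  have -> : (a + L - i = (a - i) + L)%N by lia.
  by rewrite modnDr modn_small //; lia.
by rewrite modn_small //; lia.
Qed.

Lemma modinv a L i : (a < L)%N -> (i < L)%N -> ((a + L - (a + L - i) %% L) %% L = i)%N.
Proof.
move=> aL iL; rewrite (modsub aL iL); case: ifP => ia.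
  have -> : (a + L - (a - i) = i + L)%N by lia.
  by rewrite modnDr modn_small.
have -> : (a + L - (a + L - i) = i)%N by lia.
by rewrite modn_small.
Qed.

Lemma modshift a a' L i : (a < L)%N -> (a' < L)%N -> (i < L)%N ->
  ((a' + L - (a + L - i) %% L) %% L = (i + (a' + L - a) %% L) %% L)%N.
Proof.
move=> aL a'L iL; rewrite modnDmr (modsub aL iL); case: ifP => ia.
  have -> : (a' + L - (a - i) = i + (a' + L - a))%N by lia.
  by [].
have -> : (i + (a' + L - a) = (a' + i - a) + L)%N by lia.
by rewrite modnDr; congr (_ %% _)%N; lia.
Qed.

Lemma tb_split1 (R : nmodType) L m a a' (F : nat -> nat -> R) :
 (m < L)%N -> (a < L)%N -> (a' < L)%N ->
 \sum_(c < L) (if ((a + L - c) %% L <= m)%N && ((a' + L - c) %% L <= m)%N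
               then F ((a + L - c) %% L)%N ((a' + L - c) %% L)%N else 0)
 = \sum_(i < L) (if (i + (a' + L - a) %% L <= m)%N then F i (i + (a' + L - a) %% L)%N else 0)
 + \sum_(i < L) (if (i + (L - (a' + L - a) %% L) <= m)%N
                 then F (i + (L - (a' + L - a) %% L))%N i else 0).
Proof.
move=> mL aL a'L.
have L0 : (0 < L)%N by lia.
set dl := ((a' + L - a) %% L)%N.
have hd : (dl < L)%N by rewrite ltn_pmod.
pose f (i : 'I_L) : 'I_L := Ordinal (ltn_pmod (a + L - i) L0).
have fK : involutive f by move=> i; apply: val_inj => /=; rewrite modinv.
rewrite (reindex_inj (inv_inj fK)) /=.
pose g (i : 'I_L) : 'I_L := Ordinal (ltn_pmod (i + dl) L0).
have g_inj : injective g.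
  move=> i j /(congr1 val) /= /eqP; rewrite eqn_modDr !modn_small // => /eqP ij.
  exact: val_inj.
rewrite [X in _ = _ + X](reindex_inj g_inj) /= -big_split /=.
apply: eq_bigr => i _.
have iL := ltn_ord i.
rewrite modinv // modshift // -/dl.
case: (ltnP (i + dl) L) => hid.
  rewrite modn_small //.
  have -> : (i + dl + (L - dl) <= m)%N = false by lia.
  rewrite addr0; case: ifP => h.
    by case/andP: h => _ ->.
  by case: ifP => // h2; move: h; rewrite h2 andbT (_ : (i <= m)%N) //; lia.
have -> : ((i + dl) %% L = i + dl - L)%N.
  have -> : (i + dl = (i + dl - L) + L)%N by lia.
  rewrite modnDr modn_small; lia.
have -> : (i + dl <= m)%N = false by lia.
have -> : (i + dl - L + (L - dl) = i)%N by lia.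
rewrite add0r; case: ifP => h.
  by case/andP: h => -> _.
by case: ifP => // h2; move: h; rewrite h2 /= (_ : (i + dl - L <= m)%N) //; lia.
Qed.

Lemma conv (R : nmodType) L m e (F : nat -> R) : (m < L)%N ->
  \sum_(i < L) (if (i + e <= m)%N then F i else 0) =
  if (e <= m)%N then \sum_(0 <= i < (m - e).+1) F i else 0.
Proof.
move=> mL; case: leqP => em; last first.
  by apply: big1 => i _; rewrite ifF //; lia.
rewrite -(big_mkord xpredT (fun i => if (i + e <= m)%N then F i else 0)).
rewrite (big_cat_nat _ (n := (m - e).+1)) //=; last by lia.
rewrite [\sum_((m - e).+1 <= i < L) _]big1_seq ?addr0; last first.
  move=> i /andP[_]; rewrite mem_index_iota => /andP[h _]; rewrite ifF //; lia.
apply: eq_big_nat => i /andP[_ h]; rewrite ifT //; lia.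
Qed.

Lemma sc_entry r n m1 m2 L1 L2 (H : nat -> nat -> 'M[Pauli]_(r, n)) R
  (c : 'I_L1) (d : 'I_L2) (t : 'I_n) :
  sc_pcm m1 m2 L1 L2 H R (pairo (pairo c d) t) =
  if (((R %/ r %/ L2) + L1 - c) %% L1 <= m1)%N && (((R %/ r %% L2) + L2 - d) %% L2 <= m2)%N
  then H (((R %/ r %/ L2) + L1 - c) %% L1)%N (((R %/ r %% L2) + L2 - d) %% L2)%N (omod R) t
  else PI.
Proof.
have n0 : (0 < n)%N by case: t => /= t; lia.
have L20 : (0 < L2)%N by case: d => /= d; lia.
rewrite mxE /=.
have -> : omod (pairo (pairo c d) t) = t.
  by apply: val_inj => /=; rewrite modnMDl modn_small.
rewrite divnMDl // (divn_small (ltn_ord t)) addn0.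
by rewrite divnMDl // (divn_small (ltn_ord d)) addn0 modnMDl (modn_small (ltn_ord d)).
Qed.

Lemma sympl_sym P Q : sympl P Q = sympl Q P.
Proof. by case: P; case: Q. Qed.

Lemma sympl_mx_sym r n (P Q : 'M[Pauli]_(r, n)) k1 k2 :
  sympl_mx P Q k1 k2 = sympl_mx Q P k2 k1.
Proof. by rewrite !mxE; apply: eq_bigr => t _; rewrite sympl_sym. Qed.

Lemma sum_t r n (P Q : 'M[Pauli]_(r, n)) (b1 b2 : bool) k1 k2 :
  \sum_(t < n) sympl (if b1 then P k1 t else PI) (if b2 then Q k2 t else PI)
  = if b1 && b2 then sympl_mx P Q k1 k2 else 0.
Proof.
case: b1; case: b2 => /=; first by rewrite mxE.
- by apply: big1 => t _; case: (P k1 t).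
- by apply: big1 => t _.
- by apply: big1 => t _.
Qed.

Lemma sum_if (R : nmodType) I (r : seq I) (b : bool) (F : I -> R) :
  \sum_(i <- r) (if b then F i else 0) = if b then \sum_(i <- r) F i else 0.
Proof. by case: b => //; rewrite big1. Qed.

Lemma sum_ifD (R : nmodType) L (P : 'I_L -> bool) (F G : 'I_L -> R) :
  \sum_(i < L) (if P i then F i + G i else 0) =
  \sum_(i < L) (if P i then F i else 0) + \sum_(i < L) (if P i then G i else 0).
Proof. rewrite -big_split /=; apply: eq_bigr => i _. case: (P i) => /=. by []. by rewrite addr0. Qed.

Lemma quad L1 L2 m1 m2 e1 e2 (X : nat -> nat -> 'F_2) :
  (m1 < L1)%N -> (m2 < L2)%N ->
  ((e1 <= m1)%N -> (e2 <= m2)%N ->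
     \sum_(0 <= i < (m1 - e1).+1) \sum_(0 <= j < (m2 - e2).+1) X i j = 0) ->
  \sum_(i < L1) (if (i + e1 <= m1)%N then
     \sum_(j < L2) (if (j + e2 <= m2)%N then X i j else 0) else 0) = 0.
Proof.
move=> h1 h2 hX.
under eq_bigr do rewrite (conv _ _ h2).
case: (leqP e2 m2) => he2; last by apply: big1 => i _; case: ifP.
rewrite (conv e1 (fun i => \sum_(0 <= j < (m2 - e2).+1) X i j) h1).
by case: (leqP e1 m1) => he1 //; apply: hX.
Qed.
End Helpers.
Import Helpers.


Theorem theorem1 (r n m1 m2 L1 L2 : nat) (H : nat -> nat -> 'M[Pauli]_(r, n)) :
  (0 < r)%N -> (0 < n)%N -> (0 < m1)%N -> (0 < m2)%N ->
  (m1 < L1)%N -> (m2 < L2)%N ->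
  (forall d1 d2 : nat, (d1 <= m1)%N -> (d2 <= m2)%N ->
     \sum_(0 <= i < (m1 - d1).+1) \sum_(0 <= j < (m2 - d2).+1)
        sympl_mx (H i j) (H (i + d1)%N (j + d2)%N) = 0) ->
  (forall d1 d2 : nat, (d1 <= m1)%N -> (d2 <= m2)%N ->
     \sum_(0 <= i < (m1 - d1).+1) \sum_(0 <= j < (m2 - d2).+1)
        sympl_mx (H (i + d1)%N j) (H i (j + d2)%N) = 0) ->
  sympl_mx (sc_pcm m1 m2 L1 L2 H) (sc_pcm m1 m2 L1 L2 H) = 0.
Proof.
move=> r0 n0 m10 m20 hL1 hL2 hyp1 hyp2.
apply/matrixP => R1 R2; rewrite [LHS]mxE [RHS]mxE.
have aL (R : 'I_(L1 * L2 * r)) : (R %/ r %/ L2 < L1)%N.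
  by rewrite ltn_divLR ?ltn_divLR ?ltn_ord //; lia.
have bL (R : 'I_(L1 * L2 * r)) : (R %/ r %% L2 < L2)%N by rewrite ltn_mod; lia.
rewrite sum_pair sum_pair.
under eq_bigr => c _ do under eq_bigr => d _ do rewrite (eq_bigr _ (fun t _ => congr2 sympl (sc_entry _ _ _ _ _ _ _) (sc_entry _ _ _ _ _ _ _))) sum_t.
move: (aL R1) (bL R1) (aL R2) (bL R2).
set a1 := (R1 %/ r %/ L2)%N; set b1 := (R1 %/ r %% L2)%N.
set a2 := (R2 %/ r %/ L2)%N; set b2 := (R2 %/ r %% L2)%N.
set k1 := omod R1; set k2 := omod R2 => ha1 hb1 ha2 hb2.
pose G i j i' j' := sympl_mx (H i j) (H i' j') k1 k2.
transitivity (\sum_(c < L1) (if ((a1 + L1 - c) %% L1 <= m1)%N && ((a2 + L1 - c) %% L1 <= m1)%N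
   then \sum_(d < L2) (if ((b1 + L2 - d) %% L2 <= m2)%N && ((b2 + L2 - d) %% L2 <= m2)%N
        then G ((a1 + L1 - c) %% L1)%N ((b1 + L2 - d) %% L2)%N ((a2 + L1 - c) %% L1)%N ((b2 + L2 - d) %% L2)%N
        else 0) else 0)).
  apply: eq_bigr => c _; rewrite -sum_if; apply: eq_bigr => d _.
  by case: (_ <= m1)%N; case: (_ <= m1)%N; case: (_ <= m2)%N; case: (_ <= m2)%N.
under eq_bigr => c _ do rewrite (tb_split1 (fun j j' => G ((a1 + L1 - c) %% L1)%N j ((a2 + L1 - c) %% L1)%N j') hL2 hb1 hb2).
rewrite (tb_split1 (fun i i' =>
  \sum_(j < L2) (if (j + (b2 + L2 - b1) %% L2 <= m2)%N then G i j i' (j + (b2 + L2 - b1) %% L2)%N else 0)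
  + \sum_(j < L2) (if (j + (L2 - (b2 + L2 - b1) %% L2) <= m2)%N then G i (j + (L2 - (b2 + L2 - b1) %% L2))%N i' j else 0))
  hL1 ha1 ha2).
rewrite !sum_ifD.
set d1 := ((a2 + L1 - a1) %% L1)%N; set d2 := ((b2 + L2 - b1) %% L2)%N.
set e1 := (L1 - d1)%N; set e2 := (L2 - d2)%N.
have ent (F : nat -> nat -> 'M['F_2]_r) u v x y :
    \sum_(0 <= i < u) \sum_(0 <= j < v) F i j = 0 ->
    \sum_(0 <= i < u) \sum_(0 <= j < v) F i j x y = 0.
  move=> h; have E := congr1 (fun M : 'M['F_2]_r => M x y) h; rewrite /= mxE in E.
  rewrite -[RHS]E summxE.
  by apply: eq_bigr => i _; rewrite summxE.
rewrite (quad (X := fun i j => G i j (i + d1)%N (j + d2)%N)) //; last first.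
  by move=> h1 h2; apply: ent; apply: hyp1.
rewrite (quad (X := fun i j => G i (j + e2)%N (i + d1)%N j)) //; last first.
  move=> h1 h2; rewrite /G.
  under eq_bigr do under eq_bigr do rewrite sympl_mx_sym.
  by apply: ent; apply: hyp2.
rewrite (quad (X := fun i j => G (i + e1)%N j i (j + d2)%N)) //; last first.
  by move=> h1 h2; apply: ent; apply: hyp2.
rewrite (quad (X := fun i j => G (i + e1)%N (j + e2)%N i j)) ?addr0 //.
move=> h1 h2; rewrite /G.
under eq_bigr do under eq_bigr do rewrite sympl_mx_sym.
by apply: ent; apply: hyp1.
Qed.
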